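(* Let $R$ be a ring with identity. The following are equivalent: (1) $R$ is semisimple; (2) $\mathbb{CFM}_\Lambda(R)$ is SSP for a countably infinite set $\Lambda$; (3) $\mathbb{CFM}_\Lambda(R)$ is SSP for some infinite set $\Lambda$; (4) $\mathbb{CFM}_\Lambda(R)$ is SSP for every infinite set $\Lambda$.
   Context: Rings are associative with identity. For an infinite set $\Lambda$, $\mathbb{CFM}_\Lambda(R)$ denotes the ring of column finite $\Lambda\times\Lambda$ matrices over $R$ (matrices with entries in $R$, rows and columns indexed by $\Lambda$, each column having only finitely many nonzero entries), with the usual matrix operations. A ring $S$ is right SSP if the sum of any two direct summands of $S_S$ is again a direct summand of $S_S$; left SSP analogously with ${}_SS$; $S$ is SSP if it is both right and left SSP. *)

(* Defs.v *)
From HB Require Import structures.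
From mathcomp Require Import all_boot all_order all_algebra.
From mathcomp Require Import boolp classical_sets functions cardinality fsbigop.
Set Implicit Arguments. Unset Strict Implicit. Unset Printing Implicit Defensive.
Import Order.TTheory GRing.Theory.
Local Open Scope classical_set_scope.
Local Open Scope ring_scope.

Section GenericRing.
Variables (T : Type) (S : set T) (add : T -> T -> T) (opp : T -> T)
  (zero : T) (mul : T -> T -> T).

Definition additive_subgroup (I : set T) : Prop :=
  [/\ I `<=` S, I zero,
      (forall a b, I a -> I b -> I (add a b)) &
      (forall a, I a -> I (opp a))].

Definition right_ideal (I : set T) : Prop :=
  additive_subgroup I /\ (forall a s, I a -> S s -> I (mul a s)).

Definition left_ideal (I : set T) : Prop :=
  additive_subgroup I /\ (forall a s, I a -> S s -> I (mul s a)).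

Definition set_sum (A B : set T) : set T :=
  [set x | exists a b, [/\ A a, B b & x = add a b]].

Definition direct_summand (isSub : set T -> Prop) (I : set T) : Prop :=
  isSub I /\ exists J, [/\ isSub J, I `&` J = [set zero] & set_sum I J = S].

Definition direct_summand_r := direct_summand right_ideal.
Definition direct_summand_l := direct_summand left_ideal.

Definition right_SSP : Prop :=
  forall A B, direct_summand_r A -> direct_summand_r B ->
    direct_summand_r (set_sum A B).

Definition left_SSP : Prop :=
  forall A B, direct_summand_l A -> direct_summand_l B ->
    direct_summand_l (set_sum A B).

Definition SSP : Prop := right_SSP /\ left_SSP.

Definition right_semisimple : Prop :=
  forall I, right_ideal I -> direct_summand_r I.

End GenericRing.

Definition semisimple_ring (R : pzRingType) : Prop :=
  right_semisimple [set: R] +%R (fun x => - x) 0 *%R.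

Section CFM.
Variables (Lambda : choiceType) (R : pzRingType).

Definition mx_type := Lambda -> Lambda -> R.

Definition column_finite (M : mx_type) : Prop :=
  forall j, finite_set [set i | M i j != 0].

Definition CFM : set mx_type := [set M | column_finite M].

Definition mx_add (M N : mx_type) : mx_type := fun i j => M i j + N i j.
Definition mx_opp (M : mx_type) : mx_type := fun i j => - M i j.
Definition mx_zero : mx_type := fun _ _ => 0.
(* (MN)_{ij} = sum_k M_{ik} N_{kj}; the sum has finite support when N is
   column finite (fsbig sums over the finite nonzero support). *)
Definition mx_mul (M N : mx_type) : mx_type :=
  fun i j => \sum_(k \in [set: Lambda]) M i k * N k j.

Definition CFM_SSP : Prop := SSP CFM mx_add mx_opp mx_zero mx_mul.

End CFM.

(* Main.v *)
Require Import Defs.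
From HB Require Import structures.
From mathcomp Require Import all_boot all_order all_algebra.
From mathcomp Require Import boolp classical_sets functions cardinality fsbigop.
Set Implicit Arguments. Unset Strict Implicit. Unset Printing Implicit Defensive.
Import Order.TTheory GRing.Theory.
Local Open Scope classical_set_scope.
Local Open Scope ring_scope.
Record SR (T : Type) := mkSR {
  sS : set T; sadd : T -> T -> T; sopp : T -> T; szero : T;
  smul : T -> T -> T; sone : T;
  sadd_S : forall a b, sS a -> sS b -> sS (sadd a b);
  sopp_S : forall a, sS a -> sS (sopp a);
  szero_S : sS szero;
  smul_S : forall a b, sS a -> sS b -> sS (smul a b);
  sone_S : sS sone;
  saddA : forall a b c, sS a -> sS b -> sS c -> sadd a (sadd b c) = sadd (sadd a b) c;
  saddC : forall a b, sS a -> sS b -> sadd a b = sadd b a;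
  sadd0 : forall a, sS a -> sadd szero a = a;
  saddN : forall a, sS a -> sadd a (sopp a) = szero;
  smulA : forall a b c, sS a -> sS b -> sS c -> smul a (smul b c) = smul (smul a b) c;
  smul1l : forall a, sS a -> smul sone a = a;
  smul1r : forall a, sS a -> smul a sone = a;
  smulDl : forall a b c, sS a -> sS b -> sS c -> smul (sadd a b) c = sadd (smul a c) (smul b c);
  smulDr : forall a b c, sS a -> sS b -> sS c -> smul a (sadd b c) = sadd (smul a b) (smul a c)
}.

Ltac solS := repeat first [ assumption | apply: sone_S | apply: szero_S
  | apply: sadd_S | apply: sopp_S | apply: smul_S ].

Ltac rwS L := rewrite L; try solve [solS].

Lemma saddr0 T (A : SR T) a : sS A a -> sadd A a (szero A) = a.
Proof. by move=> Sa; rwS saddC; rwS sadd0. Qed.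

Lemma saddNl T (A : SR T) a : sS A a -> sadd A (sopp A a) a = szero A.
Proof. by move=> Sa; rwS saddC; rwS saddN. Qed.

Lemma saddKl T (A : SR T) a b c : sS A a -> sS A b -> sS A c ->
  sadd A a b = sadd A a c -> b = c.
Proof.
move=> Sa Sb Sc E.
rewrite -(sadd0 Sb) -(sadd0 Sc) -(saddNl Sa).
rewrite -!saddA; try solve [solS]. by rewrite E.
Qed.

Lemma saddI0 T (A : SR T) a b : sS A a -> sS A b -> sadd A a b = a -> b = szero A.
Proof.
move=> Sa Sb E; apply: (@saddKl _ A a) => //; first by solS.
by rewrite E saddr0.
Qed.

Lemma smul0r T (A : SR T) a : sS A a -> smul A a (szero A) = szero A.
Proof.
move=> Sa; apply: (@saddI0 _ A (smul A a (szero A))); try solve [solS].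
rewrite -smulDr; try solve [solS]. by rewrite sadd0 //; solS.
Qed.
Lemma smul0l T (A : SR T) a : sS A a -> smul A (szero A) a = szero A.
Proof.
move=> Sa; apply: (@saddI0 _ A (smul A (szero A) a)); try solve [solS].
rewrite -smulDl; try solve [solS]. by rewrite sadd0 //; solS.
Qed.

Lemma saddNuniq T (A : SR T) a b : sS A a -> sS A b -> sadd A a b = szero A -> b = sopp A a.
Proof.
move=> Sa Sb E; apply: (@saddKl _ A a) => //; first by solS.
by rewrite E saddN.
Qed.

Lemma smulNr T (A : SR T) a b : sS A a -> sS A b -> smul A a (sopp A b) = sopp A (smul A a b).
Proof.
move=> Sa Sb; apply: saddNuniq; try solve [solS].
rewrite -smulDr; try solve [solS]. by rewrite saddN // smul0r.
Qed.

Lemma smulNl T (A : SR T) a b : sS A a -> sS A b -> smul A (sopp A a) b = sopp A (smul A a b).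
Proof.
move=> Sa Sb; apply: saddNuniq; try solve [solS].
rewrite -smulDl; try solve [solS]. by rewrite saddN // smul0l.
Qed.

Lemma soppK T (A : SR T) a : sS A a -> sopp A (sopp A a) = a.
Proof.
move=> Sa; apply/esym/saddNuniq; try solve [solS]. by rewrite saddNl.
Qed.

Lemma sopp0 T (A : SR T) : sopp A (szero A) = szero A.
Proof. apply/esym/saddNuniq; try solve [solS]. by rewrite sadd0 //; solS. Qed.

Lemma soppD T (A : SR T) a b : sS A a -> sS A b ->
  sopp A (sadd A a b) = sadd A (sopp A a) (sopp A b).
Proof.
move=> Sa Sb; apply/esym/saddNuniq; try solve [solS].
rwS (@saddC _ A (sopp A a)).
rwS saddA. rewrite -(@saddA _ A a); try solve [solS].
by rwS saddN; rwS saddr0; rwS saddN.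
Qed.

Definition rid T (A : SR T) := right_ideal (sS A) (sadd A) (sopp A) (szero A) (smul A).
Definition dsr T (A : SR T) := direct_summand_r (sS A) (sadd A) (sopp A) (szero A) (smul A).
Definition rSSP T (A : SR T) := right_SSP (sS A) (sadd A) (sopp A) (szero A) (smul A).

Lemma idem_dsr T (A : SR T) g : sS A g -> smul A g g = g ->
  dsr A [set x | sS A x /\ smul A g x = x].
Proof.
move=> Sg gg; split.
  split; first split.
  - by move=> x [].
  - by split; [solS| rewrite smul0r].
  - move=> a b [Sa ga] [Sb gb]; split; first by solS.
    by rwS smulDr; rewrite ga gb.
  - by move=> a [Sa ga]; split; [solS| rwS smulNr; rewrite ga].
  - by move=> a s [Sa ga] Ss; split; [solS| rwS smulA; rewrite ga].
exists [set x | sS A x /\ smul A g x = szero A]; split.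
- split; first split.
  + by move=> x [].
  + by split; [solS| rewrite smul0r].
  + move=> a b [Sa ga] [Sb gb]; split; first by solS.
    by rwS smulDr; rewrite ga gb sadd0 //; solS.
  + by move=> a [Sa ga]; split; [solS| rwS smulNr; rewrite ga sopp0].
  + by move=> a s [Sa ga] Ss; split; [solS| rwS smulA; rewrite ga smul0l].
- apply/seteqP; split => x /=.
    by move=> [[Sx ->] [_ ->]].
  by move=> ->; split; split; try solS; rewrite smul0r.
- apply/seteqP; split => x /=.
    by move=> [a [b [[Sa _] [Sb _] ->]]]; solS.
  move=> Sx; exists (smul A g x), (sadd A x (sopp A (smul A g x))).
  split.
  + by split; [solS| rwS smulA; rewrite gg].
  + split; first by solS.
    by rwS smulDr; rwS smulNr; rwS smulA; rewrite gg; rwS saddN.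
  + rwS (@saddC _ A x); rwS saddA.
    by rwS saddN; rwS sadd0.
Qed.
Lemma dsr_idem T (A : SR T) I : dsr A I ->
  exists e, [/\ I e, sS A e & forall x, I x -> smul A e x = x].
Proof.
move=> [[[IS I0 Iadd Iopp] Imul] [J [[[JS J0 Jadd Jopp] Jmul] IJ IJS]]].
have : set_sum (sadd A) I J (sone A) by rewrite IJS; solS.
move=> [e [j [Ie Jj E1]]].
have Se := IS _ Ie; have Sj := JS _ Jj.
exists e; split => // x Ix.
have Sx := IS _ Ix.
have Ex : x = sadd A (smul A e x) (smul A j x).
  by rewrite -smulDl // -E1 smul1l.
have Jjx : J (smul A j x) by apply: Jmul.
have Ijx : I (smul A j x).
  have -> : smul A j x = sadd A (sopp A (smul A e x)) x.
    by rewrite {3}Ex; rwS saddA; rwS saddNl; rwS sadd0.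
  by apply: Iadd => //; apply: Iopp; apply: Imul.
have : (I `&` J) (smul A j x) by split.
rewrite IJ => /= jx0.
by rewrite {2}Ex jx0 saddr0 //; solS.
Qed.

Lemma set_sum_rid T (A : SR T) I K : rid A I -> rid A K ->
  rid A (set_sum (sadd A) I K).
Proof.
move=> [[IS I0 Iadd Iopp] Imul] [[KS K0 Kadd Kopp] Kmul].
split; first split.
- by move=> x [a [b [Ia Kb ->]]]; apply: sadd_S; [apply: IS|apply: KS].
- by rewrite /set_sum /=; exists (szero A), (szero A); split => //; rewrite sadd0 //; solS.
- move=> x y [a [b [Ia Kb ->]]] [c [d [Ic Kd ->]]].
  have Sa := IS _ Ia; have Sb := KS _ Kb; have Sc := IS _ Ic; have Sd := KS _ Kd.
  rewrite /set_sum /=; exists (sadd A a c), (sadd A b d); split; [by apply: Iadd|by apply: Kadd|].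
  rwS saddA; rwS saddA; congr (sadd A _ d).
  rewrite -!saddA; try solve [solS]. by rwS (@saddC _ A b).
- move=> x [a [b [Ia Kb ->]]].
  have Sa := IS _ Ia; have Sb := KS _ Kb.
  rewrite /set_sum /=; exists (sopp A a), (sopp A b); split; [by apply: Iopp|by apply: Kopp|].
  by rewrite soppD.
- move=> x s [a [b [Ia Kb ->]]] Ss.
  have Sa := IS _ Ia; have Sb := KS _ Kb.
  rewrite /set_sum /=; exists (smul A a s), (smul A b s); split; [by apply: Imul|by apply: Kmul|].
  by rewrite smulDl.
Qed.
Lemma regular_rSSP T (A : SR T) :
  (forall a, sS A a -> exists2 b, sS A b & smul A (smul A a b) a = a) -> rSSP A.
Proof.
move=> reg I K dI dK.
have [eI [Ie Se eIx]] := dsr_idem dI.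
have [fK [Kf Sf fKx]] := dsr_idem dK.
set e := eI in Ie Se eIx *; set f := fK in Kf Sf fKx *.
have rI : rid A I by case: dI.
have rK : rid A K by case: dK.
have [[IS _ Iadd Iopp] Imul] := rI.
have [[KS _ Kadd Kopp] Kmul] := rK.
set h := sadd A f (sopp A (smul A e f)).
have Sh : sS A h by rewrite /h; solS.
have [b Sb hbh] := reg h Sh.
set p := smul A h b.
have Sp : sS A p by rewrite /p; solS.
set u := sadd A (sone A) (sopp A e).
have Su : sS A u by rewrite /u; solS.
set q := sadd A e (smul A p u).
have Sq : sS A q by rewrite /q; solS.
have ee : smul A e e = e by apply: eIx.
have F2 x : sS A x -> smul A u x = sadd A x (sopp A (smul A e x)).
  by move=> Sx; rewrite /u; rwS smulDl; rwS smul1l; rwS smulNl.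
have F3 : smul A e h = szero A.
  by rewrite /h; rwS smulDr; rwS smulNr; rwS smulA; rewrite ee; rwS saddN.
have F4 : smul A e p = szero A by rewrite /p; rwS smulA; rewrite F3 smul0l.
have F5 : smul A p p = p by rewrite /p; rwS smulA; rewrite hbh.
have F6 : smul A e u = szero A.
  by rewrite /u; rwS smulDr; rwS smul1r; rwS smulNr; rewrite ee; rwS saddN.
have F7 : smul A e q = e.
  by rewrite /q; rwS smulDr; rwS smulA; rewrite ee F4 smul0l // saddr0.
have F8 : smul A u q = smul A p u.
  rewrite F2 // F7 /q; rwS (@saddC _ A e); rewrite -saddA; try solve [solS].
  by rwS saddN; rwS saddr0.
have F9 : smul A q q = q.
  rewrite {1}/q; rwS smulDl; rewrite F7; rewrite -(@smulA _ A p); try solve [solS].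
  by rewrite F8; rwS smulA; rewrite F5.
have F10 : smul A q e = e.
  rewrite /q; rwS smulDl; rewrite ee; rewrite -(@smulA _ A p); try solve [solS].
  by rewrite F2 // ee saddN // smul0r // saddr0.
have F13 : smul A q f = f.
  rewrite /q; rwS smulDl; rewrite -(@smulA _ A p); try solve [solS].
  rewrite F2 // -/h /p hbh /h.
  rwS saddA; rwS (@saddC _ A (smul A e f)); rewrite -saddA; try solve [solS].
  by rwS saddN; rwS saddr0.
have -> : set_sum (sadd A) I K = [set x | sS A x /\ smul A q x = x].
  apply/seteqP; split => x /=.
    move=> [a [k [Ia Kk ->]]].
    have Sa := IS _ Ia; have Sk := KS _ Kk.
    split; first by solS.
    rwS smulDr; rewrite -{1}(eIx _ Ia) -{1}(fKx _ Kk).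
    by rwS smulA; rwS (@smulA _ A q); rewrite F10 F13 eIx // fKx.
  move=> [Sx qx].
  set t := smul A b (smul A u x).
  have St : sS A t by rewrite /t; solS.
  exists (smul A e (sadd A x (sopp A (smul A f t)))), (smul A f t).
  split; [by apply: Imul; solS| by apply: Kmul|].
  have Ex : x = sadd A (smul A e x) (smul A h t).
    rewrite -{1}qx /q; rwS smulDl; congr (sadd A _ _).
    by rewrite /t /p; rwS smulA; rwS smulA.
  rewrite {1}Ex /h; rwS smulDl; rwS smulDr; rwS smulNl; rwS smulNr.
  rewrite -smulA; try solve [solS].
  rewrite -!saddA; try solve [solS].
  by rwS (@saddC _ A (smul A f t)).
apply: idem_dsr => //.
Qed.
Definition SRop T (A : SR T) : SR T.
Proof.
refine (@mkSR T (sS A) (sadd A) (sopp A) (szero A) (fun a b => smul A b a) (sone A)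
  (@sadd_S _ A) (@sopp_S _ A) (@szero_S _ A) (fun a b Sa Sb => @smul_S _ A b a Sb Sa)
  (@sone_S _ A) (@saddA _ A) (@saddC _ A) (@sadd0 _ A) (@saddN _ A) _
  (@smul1r _ A) (@smul1l _ A) _ _).
- by move=> a b c Sa Sb Sc /=; rewrite smulA.
- by move=> a b c Sa Sb Sc /=; rewrite smulDr.
- by move=> a b c Sa Sb Sc /=; rewrite smulDl.
Defined.

Lemma regular_SSP T (A : SR T) :
  (forall a, sS A a -> exists2 b, sS A b & smul A (smul A a b) a = a) ->
  SSP (sS A) (sadd A) (sopp A) (szero A) (smul A).
Proof.
move=> reg; split; first exact: regular_rSSP.
have := @regular_rSSP _ (SRop A).
apply => a Sa; have [b Sb E] := reg a Sa.
by exists b => //=; rewrite smulA.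
Qed.
Definition fsq (L : choiceType) (X : set L) : seq L := finmap.enum_fset (fset_set X).

Lemma mem_fsq (L : choiceType) (X : set L) i : finite_set X -> (i \in fsq X) = (i \in X).
Proof. by move=> fX; apply: in_fset_set. Qed.

Lemma fsq_uniq (L : choiceType) (X : set L) : uniq (fsq X).
Proof. exact: finmap.fset_uniq. Qed.

Lemma fsumT (L : choiceType) (R : pzRingType) (f : L -> R) (X : set L) :
  finite_set X -> (forall i, ~ X i -> f i = 0) ->
  \sum_(i \in [set: L]) f i = \sum_(i <- fsq X) f i.
Proof.
move=> fX fz; apply: fsbigTE => i; rewrite in_fset_set // => /negP.
by rewrite in_setE => /fz.
Qed.

Lemma fsum1 (L : choiceType) (R : pzRingType) (f : L -> R) j :
  (forall k, k != j -> f k = 0) -> \sum_(k \in [set: L]) f k = f j.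
Proof.
move=> fz; rewrite -(fsbig_widen [set j]) ?fsbig_set1 //.
by move=> k [_ /eqP kj]; apply: fz.
Qed.
Definition colS (L : choiceType) (R : pzRingType) (M : mx_type L R) j :=
  [set i | M i j != 0].

Lemma mulE (L : choiceType) (R : pzRingType) (M N : mx_type L R) i j :
  column_finite N ->
  mx_mul M N i j = \sum_(k <- fsq (colS N j)) M i k * N k j.
Proof.
move=> cN; rewrite /mx_mul (fsumT (X := colS N j)) //; first exact: cN.
move=> k /negP.
by rewrite negbK => /eqP ->; rewrite mulr0.
Qed.

Lemma mul_cf (L : choiceType) (R : pzRingType) (M N : mx_type L R) :
  column_finite M -> column_finite N -> column_finite (mx_mul M N).
Proof.
move=> cM cN j.
apply: (sub_finite_set (B := \bigcup_(k in colS N j) colS M k)); last first.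
  by apply: bigcup_finite; [exact: cN | move=> k _; exact: cM].
move=> i /= Hne; apply: contrapT => H; move/negP: Hne; apply; apply/eqP.
rewrite /mx_mul fsbig1 // => k _.
have [Nk0|Nk0] := eqVneq (N k j) 0; first by rewrite Nk0 mulr0.
have [Mk0|Mk0] := eqVneq (M i k) 0; first by rewrite Mk0 mul0r.
by exfalso; apply: H; exists k.
Qed.

Lemma add_cf (L : choiceType) (R : pzRingType) (M N : mx_type L R) :
  column_finite M -> column_finite N -> column_finite (mx_add M N).
Proof.
move=> cM cN j; apply: (sub_finite_set (B := colS M j `|` colS N j)).
  move=> i /=; rewrite /mx_add => Hne; apply: contrapT => /not_orP [H1 H2].
  move/negP: H1; move/negP: H2; rewrite !negbK => /eqP N0 /eqP M0.
  by move: Hne; rewrite N0 M0 addr0 eqxx.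
by rewrite finite_setU; split; [apply: cM|apply: cN].
Qed.

Lemma opp_cf (L : choiceType) (R : pzRingType) (M : mx_type L R) :
  column_finite M -> column_finite (mx_opp M).
Proof.
move=> cM j; apply: (sub_finite_set (B := colS M j)) (cM j).
by move=> i /=; rewrite /mx_opp oppr_eq0.
Qed.

Lemma zero_cf (L : choiceType) (R : pzRingType) : column_finite (@mx_zero L R).
Proof.
move=> j; apply: (sub_finite_set (B := set0)); last exact: finite_set0.
by move=> i /=; rewrite /mx_zero eqxx.
Qed.

Definition mx_one (L : choiceType) (R : pzRingType) : mx_type L R :=
  fun i j => if i == j then 1 else 0.

Lemma one_cf (L : choiceType) (R : pzRingType) : column_finite (@mx_one L R).
Proof.
move=> j; apply: (sub_finite_set (B := [set j])); last exact: finite_set1.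
move=> i /=; rewrite /mx_one; case: ifP => [/eqP -> //|_]; by rewrite eqxx.
Qed.
Lemma mx_mul1l (L : choiceType) (R : pzRingType) (M : mx_type L R) :
  mx_mul (@mx_one L R) M = M.
Proof.
apply/funext => i; apply/funext => j; rewrite /mx_mul (@fsum1 _ _ _ i).
  by rewrite /mx_one eqxx mul1r.
by move=> k; rewrite /mx_one eq_sym => /negbTE ->; rewrite mul0r.
Qed.

Lemma mx_mul1r (L : choiceType) (R : pzRingType) (M : mx_type L R) :
  mx_mul M (@mx_one L R) = M.
Proof.
apply/funext => i; apply/funext => j; rewrite /mx_mul (@fsum1 _ _ _ j).
  by rewrite /mx_one eqxx mulr1.
by move=> k; rewrite /mx_one => /negbTE ->; rewrite mulr0.
Qed.

Lemma mx_mulDl (L : choiceType) (R : pzRingType) (M N P : mx_type L R) :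
  column_finite P -> mx_mul (mx_add M N) P = mx_add (mx_mul M P) (mx_mul N P).
Proof.
move=> cP; apply/funext => i; apply/funext => j.
rewrite /mx_add !mulE // -big_split /=.
by apply: eq_bigr => k _; rewrite mulrDl.
Qed.

Lemma mx_mulDr (L : choiceType) (R : pzRingType) (M N P : mx_type L R) :
  column_finite N -> column_finite P ->
  mx_mul M (mx_add N P) = mx_add (mx_mul M N) (mx_mul M P).
Proof.
move=> cN cP; apply/funext => i; apply/funext => j.
have fX : finite_set (colS N j `|` colS P j).
  by rewrite finite_setU; split; [exact: cN|exact: cP].
have z1 (Q : mx_type L R) : colS Q j `<=` colS N j `|` colS P j ->
    forall k, ~ (colS N j `|` colS P j) k -> M i k * Q k j = 0.
  move=> sub k nk; have : ~ colS Q j k by move=> /sub.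
  by move/negP; rewrite negbK => /eqP ->; rewrite mulr0.
rewrite /mx_add /mx_mul.
rewrite (fsumT fX (z1 N _)); last by move=> k; left.
rewrite (fsumT fX (z1 P _)); last by move=> k; right.
rewrite (fsumT fX (z1 (mx_add N P) _)); last first.
  move=> k /=; rewrite /colS /mx_add /= => Hne; apply: contrapT => /not_orP [H1 H2].
  move/negP: H1; move/negP: H2; rewrite !negbK => /eqP P0 /eqP N0.
  by move: Hne; rewrite N0 P0 addr0 eqxx.
rewrite -big_split /=; apply: eq_bigr => k _; exact: mulrDr.
Qed.
Lemma mx_mulA (L : choiceType) (R : pzRingType) (M N P : mx_type L R) :
  column_finite N -> column_finite P ->
  mx_mul M (mx_mul N P) = mx_mul (mx_mul M N) P.
Proof.
move=> cN cP; apply/funext => i; apply/funext => j.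
set Y := colS P j.
set X := \bigcup_(l in Y) colS N l.
have fY : finite_set Y by exact: cP.
have fX : finite_set X by apply: bigcup_finite => // l _; exact: cN.
have NX k l : Y l -> ~ X k -> N k l = 0.
  move=> Yl nX; apply/eqP; apply: contrapT => /negP H; apply: nX; exists l => //.
rewrite {1}/mx_mul (fsumT fX); last first.
  move=> k nX; rewrite mulE // big1_seq ?mulr0 // => l /andP [_].
  by rewrite mem_fsq // in_setE => /NX /(_ nX) ->; rewrite mul0r.
rewrite mulE //.
under eq_bigr do rewrite mulE // mulr_sumr.
rewrite exchange_big /=.
apply: eq_big_seq => l; rewrite mem_fsq // in_setE => Yl.
rewrite /mx_mul (fsumT fX); last by move=> k nX; rewrite NX // mulr0.
rewrite mulr_suml; apply: eq_bigr => k _; exact: mulrA.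
Qed.
Definition CFM_SR (L : choiceType) (R : pzRingType) : SR (mx_type L R).
Proof.
refine (@mkSR _ (@CFM L R) (@mx_add L R) (@mx_opp L R) (@mx_zero L R)
  (@mx_mul L R) (@mx_one L R) _ _ _ _ _ _ _ _ _ _ _ _ _ _).
- by move=> a b; apply: add_cf.
- by move=> a; apply: opp_cf.
- exact: zero_cf.
- by move=> a b; apply: mul_cf.
- exact: one_cf.
- by move=> a b c _ _ _; apply/funext => i; apply/funext => j; rewrite /mx_add addrA.
- by move=> a b _ _; apply/funext => i; apply/funext => j; rewrite /mx_add addrC.
- by move=> a _; apply/funext => i; apply/funext => j; rewrite /mx_add /mx_zero add0r.
- by move=> a _; apply/funext => i; apply/funext => j; rewrite /mx_add /mx_opp subrr.
- by move=> a b c _ Sb Sc; apply: mx_mulA.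
- by move=> a _; apply: mx_mul1l.
- by move=> a _; apply: mx_mul1r.
- by move=> a b c _ _ Sc; apply: mx_mulDl.
- by move=> a b c _ Sb Sc; apply: mx_mulDr.
Defined.
Definition vadd (L : Type) (R : pzRingType) (v w : L -> R) := fun i => v i + w i.
Definition vopp (L : Type) (R : pzRingType) (v : L -> R) := fun i => - v i.
Definition vscale (L : Type) (R : pzRingType) (v : L -> R) (r : R) := fun i => v i * r.
Definition vzero (L : Type) (R : pzRingType) : L -> R := fun _ => 0.
Arguments vzero {L R}.
Definition ev (L : choiceType) (R : pzRingType) (l : L) (r : R) : L -> R :=
  fun i => if i == l then r else 0.
Definition vfin (L : Type) (R : pzRingType) (v : L -> R) := finite_set [set i | v i != 0].

Definition wsub (L : Type) (R : pzRingType) (C : set (L -> R)) :=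
  [/\ C `<=` @vfin L R, (forall a b, C a -> C b -> C (vadd a b)),
      (forall a, C a -> C (vopp a)) & (forall a r, C a -> C (vscale a r))].

Definition submod (L : Type) (R : pzRingType) (C : set (L -> R)) := wsub C /\ C (@vzero L R).

Lemma vfin_add (L : Type) (R : pzRingType) (v w : L -> R) : vfin v -> vfin w -> vfin (vadd v w).
Proof.
move=> fv fw; apply: (sub_finite_set (B := [set i | v i != 0] `|` [set i | w i != 0])).
  move=> i /=; rewrite /vadd => Hne; apply: contrapT => /not_orP [H1 H2].
  move/negP: H1; move/negP: H2; rewrite !negbK => /eqP N0 /eqP M0.
  by move: Hne; rewrite N0 M0 addr0 eqxx.
by rewrite finite_setU.
Qed.

Lemma vfin_opp (L : Type) (R : pzRingType) (v : L -> R) : vfin v -> vfin (vopp v).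
Proof.
move=> fv; apply: (sub_finite_set (B := [set i | v i != 0])) fv.
by move=> i /=; rewrite /vopp oppr_eq0.
Qed.

Lemma vfin_scale (L : Type) (R : pzRingType) (v : L -> R) r : vfin v -> vfin (vscale v r).
Proof.
move=> fv; apply: (sub_finite_set (B := [set i | v i != 0])) fv.
move=> i /=; rewrite /vscale; apply: contraNN => /eqP ->; by rewrite mul0r.
Qed.

Lemma vfin_zero (L : Type) (R : pzRingType) : vfin (@vzero L R).
Proof.
apply: (sub_finite_set (B := set0)); last exact: finite_set0.
by move=> i /=; rewrite /vzero eqxx.
Qed.

Lemma vfin_ev (L : choiceType) (R : pzRingType) (l : L) (r : R) : vfin (ev l r).
Proof.
apply: (sub_finite_set (B := [set l])); last exact: finite_set1.
by move=> i /=; rewrite /ev; case: ifP => [/eqP -> //|_]; rewrite eqxx.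
Qed.

Ltac vext := apply/funext => ?; rewrite /vadd /vopp /vscale /vzero /ev /=.

Lemma max_sub T (P : set (set T)) C0 B : (forall B, C0 `<` B -> ~ P B) ->
  P B -> C0 `<=` B -> B `<=` C0.
Proof. by move=> mx PB CB; apply: contrapT => H; exact: (mx B). Qed.
Lemma linE (L : choiceType) (R : pzRingType) (a v : L -> R) (X : set L) :
  finite_set X -> [set k | v k != 0] `<=` X ->
  \sum_(k \in [set: L]) a k * v k = \sum_(k <- fsq X) a k * v k.
Proof.
move=> fX sX; rewrite (fsumT fX) // => k nX.
have : ~ (v k != 0) by move=> /sX.
by move/negP; rewrite negbK => /eqP ->; rewrite mulr0.
Qed.

Lemma lin_add (L : choiceType) (R : pzRingType) (a v v' : L -> R) :
  vfin v -> vfin v' ->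
  \sum_(k \in [set: L]) a k * vadd v v' k =
  \sum_(k \in [set: L]) a k * v k + \sum_(k \in [set: L]) a k * v' k.
Proof.
move=> fv fv'.
have fX : finite_set ([set k | v k != 0] `|` [set k | v' k != 0]).
  by rewrite finite_setU.
have s1 : [set k | v k != 0] `<=` [set k | v k != 0] `|` [set k | v' k != 0].
  by move=> k Hk; left.
have s2 : [set k | v' k != 0] `<=` [set k | v k != 0] `|` [set k | v' k != 0].
  by move=> k Hk; right.
have s3 : [set k | vadd v v' k != 0] `<=` [set k | v k != 0] `|` [set k | v' k != 0].
  move=> k /=; rewrite /vadd => Hne; apply: contrapT => /not_orP [H1 H2].
  move/negP: H1; move/negP: H2; rewrite !negbK => /eqP P0 /eqP N0.
  by move: Hne; rewrite N0 P0 addr0 eqxx.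
rewrite !(linE a fX) //.
by rewrite -big_split /=; apply: eq_bigr => k _; rewrite /vadd mulrDr.
Qed.

Lemma lin_opp (L : choiceType) (R : pzRingType) (a v : L -> R) :
  vfin v ->
  \sum_(k \in [set: L]) a k * vopp v k = - \sum_(k \in [set: L]) a k * v k.
Proof.
move=> fv; have s1 : [set k | vopp v k != 0] `<=` [set k | v k != 0].
  by move=> k /=; rewrite /vopp oppr_eq0.
rewrite !(linE a fv) //.
by rewrite -sumrN; apply: eq_bigr => k _; rewrite /vopp mulrN.
Qed.

Lemma lin_scale (L : choiceType) (R : pzRingType) (a v : L -> R) r :
  vfin v ->
  \sum_(k \in [set: L]) a k * vscale v r k = (\sum_(k \in [set: L]) a k * v k) * r.
Proof.
move=> fv; have s1 : [set k | vscale v r k != 0] `<=` [set k | v k != 0].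
  by move=> k /=; rewrite /vscale; apply: contraNN => /eqP ->; rewrite mul0r.
rewrite !(linE a fv) //.
by rewrite mulr_suml; apply: eq_bigr => k _; rewrite /vscale mulrA.
Qed.

Lemma lin_zero (L : choiceType) (R : pzRingType) (a : L -> R) :
  \sum_(k \in [set: L]) a k * (@vzero L R) k = 0.
Proof. by rewrite fsbig1 // => k _; rewrite /vzero mulr0. Qed.
Lemma complement (L : choiceType) (R : pzRingType) (Rss : semisimple_ring R)
  (N : set (L -> R)) : submod N ->
  exists C, [/\ submod C, (forall t, N t -> C t -> t = @vzero L R) &
    forall l, exists n c, [/\ N n, C c & ev l 1 = vadd n c]].
Proof.
move=> [[NF Nadd Nopp Nscale] N0].
pose P := [set C : set (L -> R) | wsub C /\ (forall t, N t -> C t -> t = vzero)].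
have [C0 [[wC0 dC0] mx]] : exists A, P A /\ forall B, A `<` B -> ~ P B.
  apply: Zorn_bigcup => F FP tot; split.
  - split.
    + by move=> x [C FC Cx]; have [[CF _ _ _] _] := FP _ FC; exact: CF.
    + move=> a b [C1 F1 a1] [C2 F2 b2].
      have [[_ A1 _ _] _] := FP _ F1; have [[_ A2 _ _] _] := FP _ F2.
      case: (tot _ _ F1 F2) => [s12|s21].
      * by exists C2 => //; apply: A2 => //; apply: s12.
      * by exists C1 => //; apply: A1 => //; apply: s21.
    + move=> a [C FC Ca]; have [[_ _ O _] _] := FP _ FC; by exists C => //; apply: O.
    + move=> a r [C FC Ca]; have [[_ _ _ Sc] _] := FP _ FC; by exists C => //; apply: Sc.
  - by move=> t Nt [C FC Ct]; have [_ D] := FP _ FC; exact: D.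
have [C0F C0add C0opp C0scale] := wC0.
have C00 : C0 vzero.
  pose B := C0 `|` [set vzero].
  have PB : P B.
    split; first split.
    - move=> x [/C0F //|-> ]; exact: vfin_zero.
    - move=> a b [Ca|->] [Cb|->].
      + by left; apply: C0add.
      + by left; have -> : vadd a vzero = a by vext; rewrite addr0.
      + by left; have -> : vadd vzero b = b by vext; rewrite add0r.
      + by right; vext; rewrite addr0.
    - move=> a [Ca|->]; [by left; apply: C0opp| by right; vext; rewrite oppr0].
    - move=> a r [Ca|->]; [by left; apply: C0scale| by right; vext; rewrite mul0r].
    - by move=> t Nt [Ct|->] //; apply: dC0.
  by apply: (max_sub mx PB) => //; [move=> x; left|right].
pose Ms := [set x | exists n c, [/\ N n, C0 c & x = vadd n c]].
exists C0; split.
- by split.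
- exact: dC0.
move=> l.
suff : Ms (ev l 1) by move=> [n [c [Nn Cc E]]]; exists n, c.
pose I := [set r : R | Ms (ev l r)].
have evadd a b : ev l (a + b) = vadd (ev l a) (ev l b).
  by vext; case: ifP; rewrite ?addr0.
have MsAdd a b : Ms a -> Ms b -> Ms (vadd a b).
  move=> [n [c [Nn Cc ->]]] [n' [c' [Nn' Cc' ->]]].
  exists (vadd n n'), (vadd c c'); split; [exact: Nadd|exact: C0add|].
  by vext; rewrite -!addrA (addrCA (c _)).
have rI : right_ideal [set: R] +%R (fun x => - x) 0 *%R I.
  split; first split.
  - by [].
  - by exists vzero, vzero; split => //; vext; case: ifP; rewrite addr0.
  - by move=> a b Ia Ib; rewrite /I /= evadd; exact: MsAdd.
  - move=> a [n [c [Nn Cc E]]]; exists (vopp n), (vopp c); split; [exact: Nopp|exact: C0opp|].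
    vext; rewrite -opprD. have := congr1 (fun f => f _) E. rewrite /vadd /ev /= => <-.
    by case: ifP; rewrite ?oppr0.
  - move=> a s [n [c [Nn Cc E]]] _; exists (vscale n s), (vscale c s); split; [exact: Nscale|exact: C0scale|].
    vext; rewrite -mulrDl. have := congr1 (fun f => f _) E. rewrite /vadd /ev /= => <-.
    by case: ifP; rewrite ?mul0r.
have [_ [K [[[_ K0 Kadd Kopp] Kmul] IK IKR]]] := Rss I rI.
pose C' := [set x | exists c k, [/\ C0 c, K k & x = vadd c (ev l k)]].
have PC' : P C'.
  split; first split.
  - move=> x [c [k [Cc _ ->]]]; apply: vfin_add; [exact: C0F|exact: vfin_ev].
  - move=> a b [c [k [Cc Kk ->]]] [c' [k' [Cc' Kk' ->]]].
    exists (vadd c c'), (k + k'); split; [exact: C0add|exact: Kadd|].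
    by rewrite evadd; vext; rewrite -!addrA (addrCA (ev l k _)).
  - move=> a [c [k [Cc Kk ->]]]; exists (vopp c), (- k); split; [exact: C0opp|exact: Kopp|].
    by vext; rewrite opprD; case: ifP; rewrite ?oppr0.
  - move=> a r [c [k [Cc Kk ->]]]; exists (vscale c r), (k * r); split; [exact: C0scale|exact: Kmul|].
    by vext; rewrite mulrDl; case: ifP; rewrite ?mul0r.
  - move=> t Nt [c [k [Cc Kk Et]]].
    have Ik : I k.
      exists t, (vopp c); split => //; first exact: C0opp.
      by rewrite Et; vext; rewrite addrC addrA (addrC (- _)) subrr add0r.
    have : (I `&` K) k by [].
    rewrite IK => /= k0.
    apply: dC0 => //; rewrite Et k0; suff -> : vadd c (ev l 0) = c by [].
    by vext; case: ifP; rewrite addr0.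
have sub' : C' `<=` C0.
  apply: (max_sub mx PC') => x Cx; exists x, 0; split => //.
  by vext; case: ifP; rewrite addr0.
have : set_sum +%R I K 1 by rewrite IKR.
move=> [i [k [Ii Kk E1]]].
have Ik : I k.
  exists vzero, (ev l k); split => //; last by vext; rewrite add0r.
  apply: sub'; exists vzero, k; split => //; by vext; rewrite add0r.
have : (I `&` K) k by [].
rewrite IK => /= k0.
by move: Ii; rewrite /I E1 k0 addr0.
Qed.
Definition mx_app (L : choiceType) (R : pzRingType) (a : mx_type L R) (v : L -> R) :=
  fun i => \sum_(k \in [set: L]) a i k * v k.

Lemma appE (L : choiceType) (R : pzRingType) (a : mx_type L R) v (X : set L) i :
  finite_set X -> [set k | v k != 0] `<=` X ->
  mx_app a v i = \sum_(k <- fsq X) a i k * v k.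
Proof.
move=> fX sX; rewrite /mx_app (fsumT fX) // => k nX.
have : ~ (v k != 0) by move=> /sX.
by move/negP; rewrite negbK => /eqP ->; rewrite mulr0.
Qed.

Lemma comb_in (L : choiceType) (R : pzRingType) (C : set (L -> R)) (x : L -> L -> R) w :
  submod C -> vfin w -> (forall k, C (x k)) ->
  C (fun i => \sum_(k \in [set: L]) x k i * w k).
Proof.
move=> [[_ Cadd _ Cscale] C0] fw Cx.
have -> : (fun i => \sum_(k \in [set: L]) x k i * w k) =
    (fun i => \sum_(k <- fsq [set k | w k != 0]) x k i * w k).
  apply/funext => i; rewrite (fsumT fw) // => k /negP; rewrite negbK => /eqP ->.
  by rewrite mulr0.
elim: (fsq _) => [|k s IH].
  by have -> : (fun i => \sum_(k <- [::]) x k i * w k) = vzero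
    by apply/funext => i; rewrite big_nil.
have -> : (fun i => \sum_(k0 <- k :: s) x k0 i * w k0) =
  vadd (vscale (x k) (w k)) (fun i => \sum_(k0 <- s) x k0 i * w k0).
  by apply/funext => i; rewrite big_cons.
by apply: Cadd => //; apply: Cscale.
Qed.

Lemma CFM_regular (L : choiceType) (R : pzRingType) : semisimple_ring R ->
  forall a : mx_type L R, column_finite a ->
  exists2 b, column_finite b & mx_mul (mx_mul a b) a = a.
Proof.
move=> Rss a ca.
pose N := [set w | exists v, vfin v /\ w = mx_app a v].
have NF v : vfin v -> vfin (mx_app a v).
  move=> fv; apply: (sub_finite_set (B := \bigcup_(k in [set k | v k != 0]) colS a k)).
    move=> i /= Hne; apply: contrapT => H; move/negP: Hne; apply; apply/eqP.
    rewrite /mx_app fsbig1 // => k _.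
    have [vk0|vk0] := eqVneq (v k) 0; first by rewrite vk0 mulr0.
    have [ak0|ak0] := eqVneq (a i k) 0; first by rewrite ak0 mul0r.
    by exfalso; apply: H; exists k.
  by apply: bigcup_finite => // k _; exact: ca.
have sN : submod N.
  split; first split.
  - by move=> w [v [fv ->]]; exact: NF.
  - move=> _ _ [v [fv ->]] [v' [fv' ->]]; exists (vadd v v'); split; first exact: vfin_add.
    by apply/funext => i; rewrite /mx_app lin_add.
  - move=> _ [v [fv ->]]; exists (vopp v); split; first exact: vfin_opp.
    by apply/funext => i; rewrite /mx_app lin_opp.
  - move=> _ r [v [fv ->]]; exists (vscale v r); split; first exact: vfin_scale.
    by apply/funext => i; rewrite /mx_app lin_scale.
  - exists vzero; split; first exact: vfin_zero.
    by apply/funext => i; rewrite /mx_app lin_zero.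
have [C [sC dNC hC]] := complement Rss sN.
have /choice [vv Hvv] : forall k, exists v, vfin v /\
    C (vadd (ev k 1) (vopp (mx_app a v))).
  move=> k; have [n [c [[v [fv En]] Cc E]]] := hC k.
  exists v; split => //; suff -> : vadd (ev k 1) (vopp (mx_app a v)) = c by [].
  apply/funext => i; rewrite E En /vadd /vopp.
  by rewrite addrC addrA (addrC (- _)) subrr add0r.
pose b : mx_type L R := fun l k => vv k l.
have cb : column_finite b by move=> k; exact: (Hvv k).1.
exists b => //.
apply/funext => i; apply/funext => j.
pose w := fun k => a k j.
have fw : vfin w by exact: ca.
pose s := fun i => \sum_(k \in [set: L]) mx_app a (vv k) i * w k.
pose t := fun i => \sum_(k \in [set: L]) vadd (ev k 1) (vopp (mx_app a (vv k))) i * w k.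
have Ns : N s.
  apply: (comb_in (x := fun k => mx_app a (vv k))) => // k.
  by exists (vv k); split => //; exact: (Hvv k).1.
have Ct : C t by apply: comb_in => // k; exact: (Hvv k).2.
have st i' : s i' + t i' = w i'.
  rewrite /s /t !(fsumT fw); first last.
  - by move=> k /negP; rewrite negbK => /eqP ->; rewrite mulr0.
  - by move=> k /negP; rewrite negbK => /eqP ->; rewrite mulr0.
  rewrite -big_split /=.
  under eq_bigr do rewrite -mulrDl /vadd /vopp addrCA subrr addr0.
  rewrite -(fsumT fw); last first.
    by move=> k /negP; rewrite negbK => /eqP ->; rewrite mulr0.
  rewrite (@fsum1 _ _ _ i') /ev ?eqxx ?mul1r //.
  by move=> k; rewrite eq_sym => /negbTE ->; rewrite mul0r.
have Nw : N w.
  exists (ev j 1); split; first exact: vfin_ev.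
  apply/funext => i'; rewrite /mx_app (@fsum1 _ _ _ j) /ev ?eqxx ?mulr1 //.
  by move=> k /negbTE ->; rewrite mulr0.
have Nt : N t.
  have [[_ Nadd Nopp _] _] := sN.
  have -> : t = vadd w (vopp s).
    by apply/funext => i'; rewrite /vadd /vopp -(st i') addrC addKr.
  by apply: Nadd => //; apply: Nopp.
have t0 := dNC _ Nt Ct.
have := st i; rewrite t0 /vzero addr0 => E; exact: E.
Qed.
Lemma ss_CFM_SSP (L : choiceType) (R : pzRingType) : semisimple_ring R -> CFM_SSP L R.
Proof.
move=> Rss; have := @regular_SSP _ (CFM_SR L R); apply => a Sa.
exact: CFM_regular.
Qed.
Definition Gm (L : choiceType) (R : pzRingType) (u : L) (x : L -> R) : mx_type L R :=
  fun i j => (if (i == j) && (i != u) then 1 else 0) + (if i == u then x j else 0).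

Lemma Gm_cf (L : choiceType) (R : pzRingType) (u : L) (x : L -> R) :
  column_finite (Gm u x).
Proof.
move=> j; apply: (sub_finite_set (B := [set j] `|` [set u])); last first.
  by rewrite finite_setU; split; exact: finite_set1.
move=> i /=; rewrite /Gm; case: (eqVneq i u) => [-> _|iu]; first by right.
rewrite /= addr0 andbT; case: (eqVneq i j) => [-> _|_]; [by left|by rewrite eqxx].
Qed.

Lemma GmE (L : choiceType) (R : pzRingType) (u : L) (x : L -> R) (M : mx_type L R) i j :
  mx_mul (Gm u x) M i j = if i == u then \sum_(k \in [set: L]) x k * M k j else M i j.
Proof.
rewrite /mx_mul /Gm; case: (eqVneq i u) => [->|iu].
  by apply: eq_fsbigr => k _; rewrite ?eqxx /= andbF add0r.
rewrite (@fsum1 _ _ _ i); first by rewrite eqxx /= addr0 mul1r.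
by move=> k ki; rewrite eq_sym (negbTE ki) /= addr0 mul0r.
Qed.

Lemma Gm_idem (L : choiceType) (R : pzRingType) (u : L) (x : L -> R) :
  x u = 0 -> mx_mul (Gm u x) (Gm u x) = Gm u x.
Proof.
move=> xu; apply/funext => i; apply/funext => j; rewrite GmE.
case: (eqVneq i u) => [->|//].
rewrite (@fsum1 _ _ _ j).
  rewrite /Gm; case: (eqVneq j u) => [->|ju]; first by rewrite xu mul0r eqxx andbF add0r.
  by rewrite !eqxx /= addr0 add0r mulr1.
move=> k kj; case: (eqVneq k u) => [->|ku]; first by rewrite xu mul0r.
by rewrite /Gm (negbTE kj) (negbTE ku) /= addr0 mulr0.
Qed.

Definition Dm (L : choiceType) (R : pzRingType) (u : L) (s : R) : mx_type L R :=
  fun i j => if (i == u) && (j == u) then s else 0.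

Lemma Dm_cf (L : choiceType) (R : pzRingType) (u : L) (s : R) : column_finite (Dm u s).
Proof.
move=> j; apply: (sub_finite_set (B := [set u])); last exact: finite_set1.
by move=> i /=; rewrite /Dm; case: (eqVneq i u) => [->//|]; rewrite eqxx.
Qed.

Lemma DmE (L : choiceType) (R : pzRingType) (u : L) (s : R) (M : mx_type L R) i j :
  mx_mul M (Dm u s) i j = M i u * (if j == u then s else 0).
Proof.
rewrite /mx_mul (@fsum1 _ _ _ u) /Dm ?eqxx //.
by move=> k /negbTE ->; rewrite mulr0.
Qed.

Definition Jx (L : choiceType) (R : pzRingType) (x : L -> R) : set R :=
  [set r | exists c, vfin c /\ r = \sum_(k \in [set: L]) x k * c k].

Lemma Jx_rid (L : choiceType) (R : pzRingType) (x : L -> R) :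
  right_ideal [set: R] +%R (fun x => - x) 0 *%R (Jx x).
Proof.
split; first split.
- by [].
- by exists vzero; split; [exact: vfin_zero| rewrite lin_zero].
- move=> _ _ [c [fc ->]] [c' [fc' ->]]; exists (vadd c c'); split; first exact: vfin_add.
  by rewrite lin_add.
- move=> _ [c [fc ->]]; exists (vopp c); split; first exact: vfin_opp.
  by rewrite lin_opp.
- move=> _ s [c [fc ->]] _; exists (vscale c s); split; first exact: vfin_scale.
  by rewrite lin_scale.
Qed.
Lemma key_summand (L : choiceType) (R : pzRingType) (u : L) (x : L -> R) :
  x u = 0 -> rSSP (CFM_SR L R) ->
  direct_summand_r [set: R] +%R (fun x => - x) 0 *%R (Jx x).
Proof.
move=> xu ssp.
pose z0 : L -> R := fun _ => 0.
have d0 := @idem_dsr _ (CFM_SR L R) (Gm u z0) (Gm_cf u z0) (Gm_idem (x := z0) erefl).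
have dx := @idem_dsr _ (CFM_SR L R) (Gm u x) (Gm_cf u x) (Gm_idem xu).
have [_ [C [[[CS C0 Cadd Copp] Cmul] TC TCS]]] := ssp _ _ d0 dx.
set A0 := [set M | sS (CFM_SR L R) M /\ smul (CFM_SR L R) (Gm u z0) M = M] in TC TCS.
set Ax := [set M | sS (CFM_SR L R) M /\ smul (CFM_SR L R) (Gm u x) M = M] in TC TCS.
rewrite /= in TC TCS.
pose K := [set r : R | exists M, C M /\ r = M u u].
have rK : right_ideal [set: R] +%R (fun x => - x) 0 *%R K.
  split; first split.
  - by [].
  - by exists (@mx_zero L R).
  - by move=> _ _ [M [CM ->]] [M' [CM' ->]]; exists (mx_add M M'); split => //; exact: Cadd.
  - by move=> _ [M [CM ->]]; exists (mx_opp M); split => //; exact: Copp.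
  - move=> _ s [M [CM ->]] _; exists (mx_mul M (Dm u s)); split.
      by apply: Cmul => //; exact: Dm_cf.
    by rewrite DmE eqxx.
have rJ := Jx_rid x.
split => //; exists K; split => //.
- apply/seteqP; split => a /=; last first.
    move=> ->; split; last by exists (@mx_zero L R).
    by exists vzero; split; [exact: vfin_zero| rewrite lin_zero].
  move=> [[c [fc ->]] [M [CM Ea]]].
  pose Nm := mx_mul M (Dm u 1).
  have CNm : C Nm by apply: Cmul => //; exact: Dm_cf.
  pose Y : mx_type L R := fun i j => if j == u then c i else 0.
  have cY : column_finite Y.
    move=> j; apply: (sub_finite_set (B := [set i | c i != 0])) fc.
    by move=> i /=; rewrite /Y; case: ifP => // _; rewrite eqxx.
  pose Q := mx_mul (Gm u x) Y.
  have cQ : column_finite Q by apply: mul_cf => //; exact: Gm_cf.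
  have AQ : Ax Q.
    split => //=; rewrite /Q mx_mulA ?Gm_idem //; exact: Gm_cf.
  pose P := mx_add Nm (mx_opp Q).
  have AP : A0 P.
    split.
      by apply: add_cf; [exact: CS| exact: opp_cf].
    rewrite /=; apply/funext => i; apply/funext => j; rewrite GmE.
    case: (eqVneq i u) => [->|//].
    rewrite fsbig1; last by move=> k _; rewrite /z0 mul0r.
    rewrite /P /mx_add /mx_opp /Nm /Q DmE GmE eqxx /Y.
    case: (eqVneq j u) => [_|_].
      by rewrite mulr1 Ea subrr.
    by rewrite mulr0 fsbig1 ?oppr0 ?addr0 // => k _; rewrite mulr0.
  have TNm : set_sum (@mx_add L R) A0 Ax Nm.
    exists P, Q; split => //; apply/funext => i; apply/funext => j.
    by rewrite /P /mx_add /mx_opp addrNK.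
  have : (set_sum (@mx_add L R) A0 Ax `&` C) Nm by [].
  rewrite TC => /= Nm0.
  have := congr1 (fun f => f u u) Nm0; rewrite /Nm DmE eqxx mulr1 /mx_zero /= => Muu.
  by rewrite Ea.
- apply/seteqP; split => // r _.
  have : (set_sum (@mx_add L R) (set_sum (@mx_add L R) A0 Ax) C) (@mx_one L R).
    by rewrite TCS; exact: one_cf.
  move=> [t [m [[P1 [P2 [[cP1 E1] [cP2 E2] ->]]] Cm Eone]]].
  rewrite /= in E1 E2.
  have := congr1 (fun f => f u u) Eone; rewrite /mx_one /mx_add eqxx /= => E.
  have P1uu : P1 u u = 0.
    by rewrite -E1 GmE eqxx fsbig1 // => k _; rewrite /z0 mul0r.
  have P2uu : Jx x (P2 u u).
    exists (fun k => P2 k u); split; first exact: cP2.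
    by rewrite -{1}E2 GmE eqxx.
  have [[_ _ _ _] Jmul] := rJ.
  have [[_ _ _ _] Kmul] := rK.
  exists (P2 u u * r), (m u u * r); split.
  + by apply: Jmul.
  + by apply: Kmul => //; exists m.
  + by rewrite -mulrDl -{1}(mul1r r) E P1uu add0r.
Qed.
Fixpoint Pseq (R : pzRingType) (pk : set R -> R) (n : nat) : set R :=
  if n is m.+1 then [set z | exists a r, Pseq pk m a /\ z = a + pk (Pseq pk m) * r]
  else [set 0].

Lemma Pseq_rid (R : pzRingType) (pk : set R -> R) n :
  [/\ Pseq pk n 0, (forall a b, Pseq pk n a -> Pseq pk n b -> Pseq pk n (a + b)),
      (forall a, Pseq pk n a -> Pseq pk n (- a)) &
      (forall a s, Pseq pk n a -> Pseq pk n (a * s))].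
Proof.
elim: n => [|n [P0 Padd Popp Pmul]] /=.
  split => //.
  - by move=> a b -> ->; rewrite addr0.
  - by move=> a ->; rewrite oppr0.
  - by move=> a s ->; rewrite mul0r.
split.
- by exists 0, 0; rewrite mulr0 addr0.
- move=> _ _ [a [r [Pa ->]]] [b [r' [Pb ->]]]; exists (a + b), (r + r'); split.
    exact: Padd.
  by rewrite mulrDr addrACA.
- move=> _ [a [r [Pa ->]]]; exists (- a), (- r); split; first exact: Popp.
  by rewrite opprD mulrN.
- move=> _ s [a [r [Pa ->]]]; exists (a * s), (r * s); split; first exact: Pmul.
  by rewrite mulrDl mulrA.
Qed.

Lemma Pseq_S (R : pzRingType) (pk : set R -> R) n : Pseq pk n `<=` Pseq pk n.+1.
Proof. by move=> a Pa /=; exists a, 0; rewrite mulr0 addr0. Qed.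

Lemma Pseq_mono (R : pzRingType) (pk : set R -> R) m n : (m <= n)%N ->
  Pseq pk m `<=` Pseq pk n.
Proof.
move=> /subnK <-; elim: (n - m)%N => [|k IH] //= a Pa.
by rewrite ?addSn; apply: Pseq_S; apply: IH.
Qed.

Lemma Pseq_y (R : pzRingType) (pk : set R -> R) n : Pseq pk n.+1 (pk (Pseq pk n)).
Proof.
exists 0, 1; split; last by rewrite mulr1 add0r.
by have [] := Pseq_rid pk n.
Qed.

Lemma Pseq_sub (R : pzRingType) (pk : set R -> R) (I : set R) :
  right_ideal [set: R] +%R (fun x => - x) 0 *%R I -> (forall A, I (pk A)) ->
  forall n, Pseq pk n `<=` I.
Proof.
move=> [[_ I0 Iadd _] Imul] Ipk; elim => [|n IH] /= a.
  by move=> ->.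
move=> [b [r [Pb ->]]]; apply: Iadd; first exact: IH.
by apply: Imul.
Qed.
Definition R_SR (R : pzRingType) : SR R.
Proof.
refine (@mkSR R [set: R] +%R (fun x => - x) 0 *%R 1 _ _ _ _ _ _ _ _ _ _ _ _ _ _) => //.
- by move=> a b c _ _ _; rewrite addrA.
- by move=> a b _ _; rewrite addrC.
- by move=> a _; rewrite add0r.
- by move=> a _; rewrite subrr.
- by move=> a b c _ _ _; rewrite mulrA.
- by move=> a _; rewrite mul1r.
- by move=> a _; rewrite mulr1.
- by move=> a b c _ _ _; rewrite mulrDl.
- by move=> a b c _ _ _; rewrite mulrDr.
Defined.

Lemma inj_nat (L : choiceType) : infinite_set [set: L] -> exists f : nat -> L, injective f.
Proof.
move=> /infiniteP /card_leP [f].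
pose g (n : nat) : L := \val (f (SigSub (mem_set (I : [set: nat] n)))).
exists g => m n /val_inj /(@inj _ _ _ f) H.
have := H (mem_set I) (mem_set I).
by move/(congr1 val).
Qed.

Lemma CFM_SSP_ss (L : choiceType) (R : pzRingType) :
  infinite_set [set: L] -> CFM_SSP L R -> semisimple_ring R.
Proof.
move=> infL [rssp _].
have ssp : rSSP (CFM_SR L R) := rssp.
have [iota iinj] := inj_nat infL.
move=> I rI.
have [[_ I0 Iadd Iopp] Imul] := rI.
pose pk (A : set R) : R :=
  match pselect (exists r, I r /\ ~ A r) with
  | left h => proj1_sig (cid h) | right _ => 0 end.
have pkI A : I (pk A).
  by rewrite /pk; case: pselect => [h|_] //; case: (cid h) => r [].
have pkN A : (exists r, I r /\ ~ A r) -> ~ A (pk A).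
  by move=> ex; rewrite /pk; case: pselect => [h|//]; case: (cid h) => r [].
pose y n := pk (Pseq pk n).
pose x (l : L) : R :=
  match pselect (exists n, iota n.+1 = l) with
  | left h => y (proj1_sig (cid h)) | right _ => 0 end.
have xy n : x (iota n.+1) = y n.
  rewrite /x; case: pselect => [h|nh]; last by exfalso; apply: nh; exists n.
  by case: (cid h) => m /= /iinj [->].
have xu : x (iota 0) = 0.
  by rewrite /x; case: pselect => [h|//]; case: (cid h) => m /= /iinj.
have dJ := key_summand xu ssp.
have [e [Je _ eJ]] := @dsr_idem _ (R_SR R) _ dJ.
have rJ := Jx_rid x.
have [[_ J0 Jadd _] Jmul] := rJ.
have yJ n : Jx x (y n).
  exists (ev (iota n.+1) 1); split; first exact: vfin_ev.
  rewrite (@fsum1 _ _ _ (iota n.+1)) /ev ?eqxx ?mulr1 //.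
  by move=> k /negbTE ->; rewrite mulr0.
have JP a : Jx x a -> exists m, Pseq pk m a.
  move=> [c [fc ->]]; rewrite (linE x fc) //.
  elim: (fsq _) => [|k s [m IH]].
    by exists 0%N; rewrite big_nil.
  have [m1 H1] : exists m1, Pseq pk m1 (x k * c k).
    rewrite /x; case: pselect => [h|_].
      exists (proj1_sig (cid h)).+1.
      by have [_ _ _ Pm] := Pseq_rid pk (proj1_sig (cid h)).+1; apply: Pm; exact: Pseq_y.
    by exists 0%N; rewrite /= mul0r.
  exists (maxn m1 m); rewrite big_cons.
  have [_ Padd _ _] := Pseq_rid pk (maxn m1 m).
  apply: Padd; apply: Pseq_mono H1 || apply: Pseq_mono IH.
    exact: leq_maxl.
  exact: leq_maxr.
have [m Pe] := JP e Je.
have [_ _ _ Pmul] := Pseq_rid pk m.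
have JsubP : Jx x `<=` Pseq pk m by move=> z Jz; rewrite -(eJ _ Jz); exact: Pmul.
have IsubP : I `<=` Pseq pk m.
  move=> r Ir; apply: contrapT => nP.
  have := pkN (Pseq pk m) (ex_intro _ r (conj Ir nP)).
  by apply; apply: JsubP; exact: yJ.
have PsubJ : forall n, Pseq pk n `<=` Jx x.
  elim => [|n IH] /= a; first by move=> ->.
  by move=> [b [r [Pb ->]]]; apply: Jadd; [exact: IH| apply: Jmul; [exact: yJ|]].
have -> : I = Jx x.
  apply/seteqP; split => a.
    by move=> /IsubP; exact: PsubJ.
  by move=> /JsubP; apply: Pseq_sub.
exact: dJ.
Qed.
Theorem theorem2p17 (R : pzRingType) :
  (semisimple_ring R <->
     exists Lambda : choiceType,
       [/\ countable [set: Lambda], infinite_set [set: Lambda] &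
           CFM_SSP Lambda R])
  /\ (semisimple_ring R <->
     exists Lambda : choiceType,
       infinite_set [set: Lambda] /\ CFM_SSP Lambda R)
  /\ (semisimple_ring R <->
     forall Lambda : choiceType,
       infinite_set [set: Lambda] -> CFM_SSP Lambda R).
Proof.
have infN : infinite_set [set: nat] by exact: infinite_nat.
split; [|split]; split.
- move=> Rss; exists nat; split; [exact: countableP|exact: infN|exact: ss_CFM_SSP].
- by move=> [L [_ infL H]]; exact: (CFM_SSP_ss infL H).
- by move=> Rss; exists nat; split; [exact: infN|exact: ss_CFM_SSP].
- by move=> [L [infL H]]; exact: (CFM_SSP_ss infL H).
- by move=> Rss L _; exact: ss_CFM_SSP.
- by move=> H; exact: (CFM_SSP_ss infN (H nat infN)).
Qed.
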